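(* Let $v:\mathbf S\to\mathbb R_{\ge 0}$ be submodular over signals (SOS). If $v$ is monotone, then $v$ is self-bounding (i.e. $1$-self-bounding). In general (without monotonicity), $v$ is $2$-self-bounding.
   Context: There are $n$ bidders; each signal space $S_i\subseteq\mathbb R$ is totally ordered, $\mathbf S=S_1\times\cdots\times S_n$. For $\mathbf s\in\mathbf S$, $\mathbf s_{-i}$ denotes the profile without coordinate $i$ and $(o_i,\mathbf s_{-i})$ the profile with $s_i$ replaced by $o_i\in S_i$. Write $\mathbf s\succeq\mathbf t$ if $s_i\ge t_i$ for all $i$. A function $v:\mathbf S\to\mathbb R_{\ge0}$ is monotone if $v(\mathbf s)\ge v(\mathbf t)$ whenever $\mathbf s\succeq\mathbf t$. It is submodular over signals (SOS) if for every $i\in[n]$, every $\mathbf s\succeq\mathbf t$: $v(s_i,\mathbf s_{-i})-v(t_i,\mathbf s_{-i})\le v(s_i,\mathbf t_{-i})-v(t_i,\mathbf t_{-i})$. The lower estimate is $\underline v^{(i)}(\mathbf s)=\inf_{o_i\in S_i}v(o_i,\mathbf s_{-i})$. For $d\in[n]$, $v$ is $d$-self-bounding if for every $\mathbf s\in\mathbf S$, $\sum_{i=1}^n\big(v(\mathbf s)-\underline v^{(i)}(\mathbf s)\big)\le d\cdot v(\mathbf s)$; it is self-bounding if this holds with $d=1$. *)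

(* Defs.v *)
From HB Require Import structures.
From mathcomp Require Import all_boot all_order all_algebra.
From mathcomp Require Import boolp classical_sets reals.
Set Implicit Arguments. Unset Strict Implicit. Unset Printing Implicit Defensive.
Import Order.TTheory GRing.Theory Num.Theory.
Local Open Scope ring_scope.
Local Open Scope classical_set_scope.

Section Defs.
Variables (R : realType) (n : nat).

(* A signal profile is a function 'I_n -> R; S i is the signal space of bidder i. *)
Definition profile := 'I_n -> R.

Definition in_prod (S : 'I_n -> set R) (s : profile) : Prop := forall i, S i (s i).

Definition upd (s : profile) (i : 'I_n) (o : R) : profile :=
  fun j => if j == i then o else s j.

Definition pdom (s t : profile) : Prop := forall i, t i <= s i.

Definition nonneg_on (S : 'I_n -> set R) (v : profile -> R) : Prop :=
  forall s, in_prod S s -> 0 <= v s.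

Definition monotone_on (S : 'I_n -> set R) (v : profile -> R) : Prop :=
  forall s t, in_prod S s -> in_prod S t -> pdom s t -> v t <= v s.

Definition SOS (S : 'I_n -> set R) (v : profile -> R) : Prop :=
  forall (i : 'I_n) s t, in_prod S s -> in_prod S t -> pdom s t ->
    v (upd s i (s i)) - v (upd s i (t i)) <= v (upd t i (s i)) - v (upd t i (t i)).

Definition lower_est (S : 'I_n -> set R) (v : profile -> R) (i : 'I_n) (s : profile) : R :=
  inf [set v (upd s i o) | o in S i].

Definition self_bounding_d (S : 'I_n -> set R) (v : profile -> R) (d : R) : Prop :=
  forall s, in_prod S s ->
    \sum_(i < n) (v s - lower_est S v i s) <= d * v s.

End Defs.

(* Main.v *)
Require Import Defs.
From HB Require Import structures.
From mathcomp Require Import all_boot all_order all_algebra.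
From mathcomp Require Import boolp classical_sets reals.
From mathcomp Require Import ring lra.
Import Order.TTheory GRing.Theory Num.Theory.
Local Open Scope ring_scope.

Section Aux.
Variables (R : realType) (n : nat) (S : 'I_n -> set R) (v : profile R n -> R).

Lemma upd_id (s : profile R n) i : upd s i (s i) = s.
Proof. by apply: funext => j; rewrite /upd; case: eqP => // ->. Qed.

Lemma tele (Hsos : SOS S v) (s t : profile R n) :
  in_prod S s -> in_prod S t -> pdom s t \/ pdom t s ->
  \sum_(i < n) (v s - v (upd s i (t i))) <= v s - v t.
Proof.
move=> hs ht Hdir.
pose u := fun k : nat => ((fun j : 'I_n => if (j < k)%N then t j else s j) : profile R n).
have u0 : u 0%N = s by [].
have un : u n = t by apply: funext => j; rewrite /u ltn_ord.
have uin k : in_prod S (u k) by move=> j; rewrite /u; case: ifP.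
have step (k : 'I_n) : v s - v (upd s k (t k)) <= v (u k) - v (u k.+1).
  have e1 : upd (u k.+1) k (s k) = u k.
    apply: funext => j; rewrite /upd /u; case: eqP => [->|/eqP ne]; first by rewrite ltnn.
    rewrite ltnS leq_eqVlt.
    have -> : ((j : nat) == k) = false by apply/negbTE.
    by [].
  have e2 : upd (u k.+1) k (t k) = u k.+1.
    apply: funext => j; rewrite /upd /u; case: eqP => [->|//]; by rewrite ltnSn.
  have ek : u k.+1 k = t k by rewrite /u ltnSn.
  case: Hdir => [Hst|Hts].
  - have hd : pdom s (u k.+1) by move=> j; rewrite /u; case: ifP => // _; exact: Hst.
    have := Hsos k s (u k.+1) hs (uin k.+1) hd.
    by rewrite ek upd_id e1 e2.
  - have hd : pdom (u k.+1) s by move=> j; rewrite /u; case: ifP => // _; exact: Hts.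
    have := Hsos k (u k.+1) s (uin k.+1) hs hd.
    rewrite ek upd_id e1 e2 => h; lra.
apply: le_trans (ler_sum _ (fun k _ => step k)) _.
rewrite -(big_mkord xpredT (fun k => v (u k) - v (u k.+1))).
rewrite (telescope_sumr_eq (fun k => - v (u k))) // ?un ?u0; first lra.
by move=> k _; rewrite opprK addrC.
Qed.

Lemma allo (Hnn : nonneg_on S v) (Hsos : SOS S v) (s : profile R n) (o : 'I_n -> R) :
  in_prod S s -> (forall i, S i (o i)) ->
  (monotone_on S v -> \sum_(i < n) (v s - v (upd s i (o i))) <= v s) /\
  \sum_(i < n) (v s - v (upd s i (o i))) <= 2 * v s.
Proof.
move=> hs ho.
pose tmin := (fun j => Num.min (o j) (s j)) : profile R n.
pose tmax := (fun j => Num.max (o j) (s j)) : profile R n.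
have hmin : in_prod S tmin by move=> j; rewrite /tmin; case: leP.
have hmax : in_prod S tmax by move=> j; rewrite /tmax; case: leP.
have d1 : pdom s tmin by move=> j; rewrite /tmin ge_min lexx orbT.
have d2 : pdom tmax s by move=> j; rewrite /tmax le_max lexx orbT.
have T1 := tele Hsos s tmin hs hmin (or_introl d1).
have T2 := tele Hsos s tmax hs hmax (or_intror d2).
have p1 := Hnn _ hmin. have p2 := Hnn _ hmax.
split.
- move=> Hmon; apply: le_trans _ (_ : v s - v tmin <= v s); last lra.
  apply: le_trans T1; apply: ler_sum => i _.
  suff : v (upd s i (tmin i)) <= v (upd s i (o i)) by lra.
  have hu : forall x, S i x -> in_prod S (upd s i x).
    by move=> x hx j; rewrite /upd; case: eqP => // ->.
  apply: Hmon; [exact: hu | exact: hu | ].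
  by move=> j; rewrite /upd; case: eqP => _ //; rewrite /tmin ge_min lexx.
- have -> : \sum_(i < n) (v s - v (upd s i (o i))) =
    \sum_(i < n) (v s - v (upd s i (tmin i))) + \sum_(i < n) (v s - v (upd s i (tmax i))).
    rewrite -big_split; apply: eq_bigr => i _; rewrite /tmin /tmax.
    by case: leP => _ /=; rewrite upd_id subrr ?addr0 ?add0r.
  lra.
Qed.

Lemma from_inf (d : R) (Hnn : nonneg_on S v) (s : profile R n) : in_prod S s ->
  (forall o : 'I_n -> R, (forall i, S i (o i)) ->
      \sum_(i < n) (v s - v (upd s i (o i))) <= d * v s) ->
  \sum_(i < n) (v s - lower_est S v i s) <= d * v s.
Proof.
move=> hs H; apply/ler_addgt0Pr => e e0.
pose eps := e / (n%:R + 1).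
have n0 : (0 : R) <= n%:R by [].
have n1 : (0 : R) < n%:R + 1 by lra.
have eps0 : 0 < eps by rewrite /eps divr_gt0.
have epsE : eps * n%:R = e - eps.
  rewrite /eps; field; lra.
have hu : forall i x, S i x -> in_prod S (upd s i x).
  by move=> i x hx j; rewrite /upd; case: eqP => // ->.
have ex : forall i : 'I_n, exists o, S i o /\ v (upd s i o) < lower_est S v i s + eps.
  move=> i.
  have hi : has_inf [set v (upd s i o) | o in S i].
    split; first by exists (v (upd s i (s i))), (s i).
    exists 0 => _ [o ho <-]; exact: Hnn _ (hu _ _ ho).
  have [_ [o ho <-] lt] := inf_adherent eps0 hi.
  by exists o.
have [o Ho] := choice ex.
have := H o (fun i => (Ho i).1).
have : \sum_(i < n) (v s - lower_est S v i s) <=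
       \sum_(i < n) (v s - v (upd s i (o i))) + \sum_(i < n) eps.
  rewrite -big_split; apply: ler_sum => i _ /=; have := (Ho i).2; lra.
rewrite sumr_const card_ord -mulr_natr epsE; lra.
Qed.

End Aux.

Theorem mainTheorem1 (R : realType) (n : nat) (S : 'I_n -> set R)
    (v : profile R n -> R) :
  nonneg_on S v -> SOS S v ->
  (monotone_on S v -> self_bounding_d S v 1) /\ self_bounding_d S v 2.
Proof.
move=> Hnn Hsos; split.
- move=> Hmon s hs; apply: from_inf => // o ho.
  by rewrite mul1r; exact: (proj1 (@allo _ _ _ _ Hnn Hsos s o hs ho)) Hmon.
- move=> s hs; apply: from_inf => // o ho.
  exact: (proj2 (@allo _ _ _ _ Hnn Hsos s o hs ho)).
Qed.
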